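(* Let $V$ be a finite-dimensional real representation of $SO(3)$ and $v\in V$. Then $\dim\mathbf{Cov}_1(v)\in\{0,1,3\}$, and the symmetry class of $\mathbf{Cov}_1(v)$ is: $[SO(3)]$ iff $\mathbf{Cov}_1(v)=\{0\}$; $[SO(2)]$ iff $\dim\mathbf{Cov}_1(v)=1$; the trivial class $[\{1\}]$ iff $\dim\mathbf{Cov}_1(v)=3$.
   Context: $\mathbf{Cov}_1(v)\subset\mathbb{R}^3$ is the set of values at $v$ of all $SO(3)$-equivariant polynomial maps $V\to\mathbb{R}^3$ (standard action on $\mathbb{R}^3$); it is a linear subspace. The symmetry group of a subspace $F\subset\mathbb{R}^3$ is $\{g\in SO(3): gx=x\ \forall x\in F\}$ and its symmetry class is the conjugacy class of this group in $SO(3)$. $SO(2)$ denotes the group of rotations about the $z$-axis. *)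

(* Defs.v *)
From HB Require Import structures.
From mathcomp Require Import all_boot all_order all_algebra.
From mathcomp Require Import reals.
From mathcomp Require mpoly.
Set Implicit Arguments. Unset Strict Implicit. Unset Printing Implicit Defensive.
Import Order.TTheory GRing.Theory Num.Theory.
Local Open Scope ring_scope.

Section Defs.
Variable R : realType.

Definition SO3 (g : 'M[R]_3) : Prop := g^T *m g = 1%:M /\ \det g = 1.

Definition rotz (c s : R) : 'M[R]_3 :=
  \matrix_(i < 3, j < 3)
    (if (i == 0%N :> nat) && (j == 0%N :> nat) then c
     else if (i == 0%N :> nat) && (j == 1%N :> nat) then - s
     else if (i == 1%N :> nat) && (j == 0%N :> nat) then s
     else if (i == 1%N :> nat) && (j == 1%N :> nat) then c
     else if (i == 2%N :> nat) && (j == 2%N :> nat) then 1 else 0).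

(* SO(2) = the group of rotations about the z-axis *)
Definition SO2 (g : 'M[R]_3) : Prop := exists c s : R, c ^+ 2 + s ^+ 2 = 1 /\ g = rotz c s.

Definition trivG (g : 'M[R]_3) : Prop := g = 1%:M.

Definition mx_cont_on {n : nat} (rho : 'M[R]_3 -> 'M[R]_n) : Prop :=
  forall g, SO3 g -> forall (i j : 'I_n) (e : R), 0 < e ->
    exists2 d : R, 0 < d & forall h, SO3 h ->
      (forall k l : 'I_3, `|h k l - g k l| < d) -> `|rho h i j - rho g i j| < e.

(* a finite-dimensional (continuous) real representation of SO(3) on R^n
   (column vectors), g . v = rho g *m v *)
Definition is_rep {n : nat} (rho : 'M[R]_3 -> 'M[R]_n) : Prop :=
  [/\ rho 1%:M = 1%:M,
      (forall g h, SO3 g -> SO3 h -> rho (g *m h) = rho g *m rho h)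
    & mx_cont_on rho].

Definition poly_map {n : nat} (f : 'cV[R]_n -> 'cV[R]_3) : Prop :=
  exists p : 'I_3 -> mpoly.mpoly n R,
    forall v : 'cV[R]_n, f v = \col_(k < 3) mpoly.meval (fun i => v i 0) (p k).

Definition equivariant {n : nat} (rho : 'M[R]_3 -> 'M[R]_n)
  (f : 'cV[R]_n -> 'cV[R]_3) : Prop :=
  forall g v, SO3 g -> f (rho g *m v) = g *m f v.

Definition Cov1 {n : nat} (rho : 'M[R]_3 -> 'M[R]_n) (v : 'cV[R]_n)
  (x : 'cV[R]_3) : Prop :=
  exists f, poly_map f /\ equivariant rho f /\ f v = x.

Definition subspace_dim (S : 'cV[R]_3 -> Prop) (d : nat) : Prop :=
  exists B : 'M[R]_(d, 3), row_free B /\ forall x, S x <-> (x^T <= B)%MS.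

Definition sym_group (F : 'cV[R]_3 -> Prop) (g : 'M[R]_3) : Prop :=
  SO3 g /\ forall x, F x -> g *m x = x.

Definition conj_class (H K : 'M[R]_3 -> Prop) : Prop :=
  exists2 a, SO3 a & forall g, H g <-> K (a^T *m g *m a).

End Defs.

(* Main.v *)
Require Import Defs.
From HB Require Import structures.
From mathcomp Require Import all_boot all_order all_algebra.
From mathcomp Require Import reals.
From mathcomp Require Import ring lra.
From Stdlib Require Import Classical.
From mathcomp Require Import mpoly.
Set Implicit Arguments. Unset Strict Implicit. Unset Printing Implicit Defensive.
Import Order.TTheory GRing.Theory Num.Theory.
Local Open Scope ring_scope.

Section S.
Variable R : realType.

Definition i0 : 'I_3 := @Ordinal 3 0 isT.
Definition i1 : 'I_3 := @Ordinal 3 1 isT.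
Definition i2 : 'I_3 := @Ordinal 3 2 isT.

Definition M33 (a b c d e f g h i : R) : 'M[R]_3 :=
  \matrix_(k < 3, l < 3) nth 0 (nth [::] [:: [:: a; b; c]; [:: d; e; f]; [:: g; h; i]] k) l.
Definition V3 (a b c : R) : 'cV[R]_3 := \col_(k < 3) nth 0 [:: a; b; c] k.

Ltac ent := apply/matrixP;
  case => [[|[|[|?]]] ?] //; case => [[|[|[|?]]] ?] //;
  repeat (rewrite ?mxE ?big_ord_recl ?big_ord0 /=); try done.

Lemma det33 a b c d e f g h i :
  \det (M33 a b c d e f g h i) = a*(e*i - f*h) - b*(d*i - f*g) + c*(d*h - e*g).
Proof.
rewrite (expand_det_row _ 0) !big_ord_recl big_ord0 /cofactor.
rewrite !(expand_det_row _ 0) !big_ord_recl !big_ord0 /cofactor /=.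
rewrite !det_mx11 !mxE /=. rewrite !expr0 !expr1 !expr2. ring.
Qed.

Lemma M33E (g : 'M[R]_3) : g = M33 (g i0 i0) (g i0 i1) (g i0 i2) (g i1 i0) (g i1 i1) (g i1 i2) (g i2 i0) (g i2 i1) (g i2 i2).
Proof. ent; by congr (g _ _); apply: val_inj. Qed.

Lemma V3E (x : 'cV[R]_3) : x = V3 (x i0 0) (x i1 0) (x i2 0).
Proof. ent; by congr (x _ _); apply: val_inj. Qed.

Lemma mulM33 a b c d e f g h i a' b' c' d' e' f' g' h' i' :
  M33 a b c d e f g h i *m M33 a' b' c' d' e' f' g' h' i' =
  M33 (a*a'+b*d'+c*g') (a*b'+b*e'+c*h') (a*c'+b*f'+c*i')
      (d*a'+e*d'+f*g') (d*b'+e*e'+f*h') (d*c'+e*f'+f*i')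
      (g*a'+h*d'+i*g') (g*b'+h*e'+i*h') (g*c'+h*f'+i*i').
Proof. ent; ring. Qed.

Lemma mulMV a b c d e f g h i x y z :
  M33 a b c d e f g h i *m V3 x y z = V3 (a*x+b*y+c*z) (d*x+e*y+f*z) (g*x+h*y+i*z).
Proof. ent; ring. Qed.

Lemma trM33 a b c d e f g h i :
  (M33 a b c d e f g h i)^T = M33 a d g b e h c f i.
Proof. ent. Qed.

Lemma oneM33 : (1%:M : 'M[R]_3) = M33 1 0 0 0 1 0 0 0 1.
Proof. ent. Qed.

Lemma M33_inj a b c d e f g h i a' b' c' d' e' f' g' h' i' :
  M33 a b c d e f g h i = M33 a' b' c' d' e' f' g' h' i' ->
  a = a' /\ b = b' /\ c = c' /\ d = d' /\ e = e' /\ f = f' /\ g = g' /\ h = h' /\ i = i'.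
Proof.
move=> E.
have F k l : M33 a b c d e f g h i k l = M33 a' b' c' d' e' f' g' h' i' k l by rewrite E.
by move: (F i0 i0) (F i0 i1) (F i0 i2) (F i1 i0) (F i1 i1) (F i1 i2) (F i2 i0) (F i2 i1) (F i2 i2);
  rewrite !mxE /= => *; repeat split.
Qed.

Lemma V3_inj a b c a' b' c' : V3 a b c = V3 a' b' c' -> [/\ a = a', b = b' & c = c'].
Proof.
move=> E.
have F k : V3 a b c k 0 = V3 a' b' c' k 0 by rewrite E.
by move: (F i0) (F i1) (F i2); rewrite !mxE /= => *; split.
Qed.


Lemma scalM33 k : (k%:M : 'M[R]_3) = M33 k 0 0 0 k 0 0 0 k.
Proof. ent. Qed.

Lemma SO3_1 : SO3 (1%:M : 'M[R]_3).
Proof. by split; [rewrite trmx1 mulmx1 | rewrite det1]. Qed.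

Lemma SO3_mul (g h : 'M[R]_3) : SO3 g -> SO3 h -> SO3 (g *m h).
Proof.
move=> [g1 g2] [h1 h2]; split; last by rewrite det_mulmx g2 h2 mulr1.
by rewrite trmx_mul mulmxA -(mulmxA h^T) g1 mulmx1 h1.
Qed.

Lemma SO3_tr (g : 'M[R]_3) : SO3 g -> SO3 g^T.
Proof. by move=> [g1 g2]; split; [rewrite trmxK; apply: mulmx1C | rewrite det_tr]. Qed.

Lemma SO3_rt (g : 'M[R]_3) : SO3 g -> g *m g^T = 1%:M.
Proof. by move=> [g1 _]; apply: mulmx1C. Qed.

Definition cross (x y : 'cV[R]_3) : 'cV[R]_3 :=
  V3 (x i1 0 * y i2 0 - x i2 0 * y i1 0) (x i2 0 * y i0 0 - x i0 0 * y i2 0)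
     (x i0 0 * y i1 0 - x i1 0 * y i0 0).

Definition Cof (g : 'M[R]_3) : 'M[R]_3 :=
  let a := g i0 i0 in let b := g i0 i1 in let c := g i0 i2 in
  let d := g i1 i0 in let e := g i1 i1 in let f := g i1 i2 in
  let g' := g i2 i0 in let h := g i2 i1 in let i := g i2 i2 in
  M33 (e*i - f*h) (f*g' - d*i) (d*h - e*g')
      (c*h - b*i) (a*i - c*g') (b*g' - a*h)
      (b*f - c*e) (c*d - a*f) (a*e - b*d).

Lemma crossA (g : 'M[R]_3) x y : cross (g *m x) (g *m y) = Cof g *m cross x y.
Proof.
rewrite {1 2}(M33E g) (V3E x) (V3E y) /Cof /cross !mulMV !mxE /=.
congr V3; ring.
Qed.

Lemma trCof (g : 'M[R]_3) : g^T *m Cof g = (\det g)%:M.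
Proof.
move: (M33E g) => E.
rewrite [X in X^T]E [X in \det X]E trM33 /Cof mulM33 det33 scalM33.
congr M33; ring.
Qed.

Lemma cross_equiv (g : 'M[R]_3) x y : SO3 g -> cross (g *m x) (g *m y) = g *m cross x y.
Proof.
move=> Hg; rewrite crossA; congr (_ *m _).
case: (Hg) => _ d1.
by rewrite -[Cof g]mul1mx -(SO3_rt Hg) -mulmxA trCof d1 mulmx1.
Qed.


Section Cov.
Variables (n : nat) (rho : 'M[R]_3 -> 'M[R]_n) (v : 'cV[R]_n).
Local Notation S := (Cov1 rho v).

Lemma Cov1_0 : S 0.
Proof.
exists (fun _ => 0); split; last split => //.
  exists (fun _ => 0 : mpoly.mpoly n R) => w; apply/matrixP => i j; by rewrite !mxE mpoly.meval0.
by move=> g w _; rewrite mulmx0.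
Qed.

Lemma Cov1_add x y : S x -> S y -> S (x + y).
Proof.
move=> [f1 [[p1 P1] [E1 V1]]] [f2 [[p2 P2] [E2 V2]]].
exists (fun w => f1 w + f2 w); split; last split.
- exists (fun k => p1 k + p2 k) => w; rewrite P1 P2.
  by apply/matrixP => i j; rewrite !mxE mpoly.mevalD.
- by move=> g w Hg; rewrite E1 // E2 // mulmxDr.
- by rewrite V1 V2.
Qed.

Lemma Cov1_scale c x : S x -> S (c *: x).
Proof.
move=> [f1 [[p1 P1] [E1 V1]]].
exists (fun w => c *: f1 w); split; last split.
- exists (fun k => c *: p1 k) => w; rewrite P1.
  by apply/matrixP => i j; rewrite !mxE mpoly.mevalZ.
- by move=> g w Hg; rewrite E1 // scalemxAr.
- by rewrite V1.
Qed.

Lemma Cov1_cross x y : S x -> S y -> S (cross x y).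
Proof.
move=> [f1 [[p1 P1] [E1 V1]]] [f2 [[p2 P2] [E2 V2]]].
exists (fun w => cross (f1 w) (f2 w)); split; last split.
- exists (fun k => nth 0 [:: p1 i1 * p2 i2 - p1 i2 * p2 i1;
                           p1 i2 * p2 i0 - p1 i0 * p2 i2;
                           p1 i0 * p2 i1 - p1 i1 * p2 i0] k) => w.
  rewrite P1 P2 /cross; apply/matrixP; case => [[|[|[|?]]] ?] //; case => [[|?] ?] //;
  by rewrite !mxE /= mpoly.mevalB !mpoly.mevalM.
- by move=> g w Hg; rewrite E1 // E2 // cross_equiv.
- by rewrite V1 V2.
Qed.

End Cov.

Lemma V3_0 : (0 : 'cV[R]_3) = V3 0 0 0.
Proof. ent. Qed.
Lemma V3D a b c a' b' c' : V3 a b c + V3 a' b' c' = V3 (a+a') (b+b') (c+c').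
Proof. ent. Qed.
Lemma V3Z k a b c : k *: V3 a b c = V3 (k*a) (k*b) (k*c).
Proof. ent. Qed.
Lemma crossV3 a b c a' b' c' :
  cross (V3 a b c) (V3 a' b' c') = V3 (b*c' - c*b') (c*a' - a*c') (a*b' - b*a').
Proof. by rewrite /cross !mxE. Qed.

Lemma sos3 (a b c : R) : a^+2 + b^+2 + c^+2 = 0 -> [/\ a = 0, b = 0 & c = 0].
Proof.
move=> H.
have := sqr_ge0 a; have := sqr_ge0 b; have := sqr_ge0 c => Hc Hb Ha.
have ha : a^+2 = 0 by lra.
have hb : b^+2 = 0 by lra.
have hc : c^+2 = 0 by lra.
by split; apply/eqP; rewrite -sqrf_eq0; apply/eqP.
Qed.

Lemma eq_from (A B C : R) : A - B = C -> C = 0 -> A = B.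
Proof. by move=> E H; apply/eqP; rewrite -subr_eq0 E H. Qed.

Lemma V3_neq0 a b c : V3 a b c != 0 -> [\/ a != 0, b != 0 | c != 0].
Proof.
move=> H; case: (eqVneq a 0) => [Ea|]; last by constructor 1.
case: (eqVneq b 0) => [Eb|]; last by constructor 2.
case: (eqVneq c 0) => [Ec|]; last by constructor 3.
by rewrite Ea Eb Ec -V3_0 eqxx in H.
Qed.

Ltac sol h := first [ apply: eq_from h; ring | apply/esym; apply: eq_from h; ring ].

Lemma span3 (u w : 'cV[R]_3) : u != 0 -> (forall c, w != c *: u) ->
  forall x, exists a b c, x = a *: u + b *: w + c *: cross u w.
Proof.
rewrite (V3E u) (V3E w) => Hu Hw x; rewrite (V3E x) (V3E u) (V3E w).
move: (u i0 0) (u i1 0) (u i2 0) (w i0 0) (w i1 0) (w i2 0) (x i0 0) (x i1 0) (x i2 0) Hu Hw.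
move=> u0 u1 u2 w0 w1 w2 x0 x1 x2 Hu Hw.
rewrite crossV3.
set c0 := u1 * w2 - u2 * w1; set c1 := u2 * w0 - u0 * w2; set c2 := u0 * w1 - u1 * w0.
set N := c0^+2 + c1^+2 + c2^+2.
have HN : N != 0.
  apply/eqP => /sos3 [h0 h1 h2]; rewrite /c0 /c1 /c2 in h0 h1 h2.
  case/V3_neq0: Hu => Hk.
  - move: (Hw (w0 / u0)); rewrite V3Z; case/eqP; congr V3.
    + by rewrite divfK.
    + rewrite mulrAC; apply: (canRL (mulfK Hk)).
      by sol h2.
    + rewrite mulrAC; apply: (canRL (mulfK Hk)).
      by sol h1.
  - move: (Hw (w1 / u1)); rewrite V3Z; case/eqP; congr V3.
    + rewrite mulrAC; apply: (canRL (mulfK Hk)).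
      by sol h2.
    + by rewrite divfK.
    + rewrite mulrAC; apply: (canRL (mulfK Hk)).
      by sol h0.
  - move: (Hw (w2 / u2)); rewrite V3Z; case/eqP; congr V3.
    + rewrite mulrAC; apply: (canRL (mulfK Hk)).
      by sol h1.
    + rewrite mulrAC; apply: (canRL (mulfK Hk)).
      by sol h0.
    + by rewrite divfK.
pose al := x0 * (w1 * c2 - w2 * c1) + x1 * (w2 * c0 - w0 * c2) + x2 * (w0 * c1 - w1 * c0).
pose be := x0 * (c1 * u2 - c2 * u1) + x1 * (c2 * u0 - c0 * u2) + x2 * (c0 * u1 - c1 * u0).
pose ga := x0 * c0 + x1 * c1 + x2 * c2.
exists (al / N), (be / N), (ga / N).
rewrite !V3Z !V3D; congr V3; apply: (mulIf HN); rewrite !mulrDl -!mulrA !(mulrCA _^-1) !mulVf // !mulr1;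
  rewrite /al /be /ga /N /c0 /c1 /c2; rewrite !mxE /=; ring.
Qed.



Section Dim.
Variable S : 'cV[R]_3 -> Prop.
Hypotheses (S0 : S 0) (SD : forall x y, S x -> S y -> S (x + y))
  (SZ : forall c x, S x -> S (c *: x)) (SX : forall x y, S x -> S y -> S (cross x y)).

Lemma dim_cases : [\/ (forall x, S x <-> x = 0),
      exists2 u, u != 0 & forall x, S x <-> exists c, x = c *: u
    | forall x, S x].
Proof.
case: (classic (exists u, S u /\ u != 0)) => [[u [Su Hu]]|H]; last first.
  constructor 1 => x; split => [Sx|->//].
  by apply/eqP; apply: NNPP => Hx; apply: H; exists x; split => //; apply/negP.
case: (classic (exists w, S w /\ forall c, w != c *: u)) => [[w [Sw Hw]]|H]; last first.
  constructor 2; exists u => // x; split => [Sx|[c ->]]; last exact: SZ.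
  apply: NNPP => Hn; apply: H; exists x; split => // c; apply/eqP => E.
  by apply: Hn; exists c.
constructor 3 => x; have [a [b [c ->]]] := span3 Hu Hw x.
by apply: SD; [apply: SD|]; apply: SZ => //; apply: SX.
Qed.

Lemma sd0 : (forall x, S x <-> x = 0) -> subspace_dim S 0.
Proof.
move=> H; exists 0; split.
  by rewrite /row_free -leqn0 rank_leq_row.
move=> x; rewrite H; split => [->|/submx0null]; first by rewrite trmx0 sub0mx.
by move/(congr1 trmx); rewrite trmxK trmx0.
Qed.

Lemma sd1 u : u != 0 -> (forall x, S x <-> exists c, x = c *: u) -> subspace_dim S 1.
Proof.
move=> Hu H; exists u^T; split.
  have Hu' : u^T != 0.
    by apply/eqP => E; move/eqP: Hu; apply; rewrite -[u]trmxK E trmx0.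
  by rewrite /row_free rank_rV Hu'.
move=> x; rewrite H; split => [[c ->]|/sub_rVP [c Hc]].
  by apply/sub_rVP; exists c; rewrite linearZ.
by exists c; apply: trmx_inj; rewrite Hc linearZ.
Qed.

Lemma sd3 : (forall x, S x) -> subspace_dim S 3.
Proof.
move=> H; exists 1%:M; split; first by rewrite row_free_unit unitmx1.
by move=> x; rewrite submx1; split.
Qed.

End Dim.


Definition e3 : 'cV[R]_3 := V3 0 0 1.
Definition h1 : 'M[R]_3 := M33 1 0 0 0 (-1) 0 0 0 (-1).
Definition rxz (c s : R) : 'M[R]_3 := M33 c 0 s 0 1 0 (-s) 0 c.

Lemma rotzE (c s : R) : rotz c s = M33 c (-s) 0 s c 0 0 0 1.
Proof. ent. Qed.

Lemma SO3_M33 (a b c d e f g h i : R) :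
  M33 a d g b e h c f i *m M33 a b c d e f g h i = M33 1 0 0 0 1 0 0 0 1 ->
  a*(e*i - f*h) - b*(d*i - f*g) + c*(d*h - e*g) = 1 ->
  SO3 (M33 a b c d e f g h i).
Proof. by move=> E D; split; rewrite ?trM33 ?E ?oneM33 ?det33. Qed.

Ltac byH H := first [ring | (etransitivity; [|exact H]; ring)].

Lemma SO3_rotz (c s : R) : c^+2 + s^+2 = 1 -> SO3 (rotz c s).
Proof.
move=> H; rewrite rotzE; apply: SO3_M33; last by byH H.
rewrite mulM33; congr M33; byH H.
Qed.

Lemma SO3_rxz (c s : R) : c^+2 + s^+2 = 1 -> SO3 (rxz c s).
Proof.
move=> H; apply: SO3_M33; last by byH H.
rewrite mulM33; congr M33; byH H.
Qed.

Lemma SO3_h1 : SO3 h1.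
Proof. by apply: SO3_M33; [rewrite mulM33; congr M33; ring | ring]. Qed.

Lemma notSO2_h1 : ~ SO2 h1.
Proof.
move=> [c [s [_ E]]]; move: E; rewrite rotzE => /M33_inj.
move=> [_ [_ [_ [_ [_ [_ [_ [_ E]]]]]]]].
have : (2 : R) = 0 by rewrite -[2]/(1 + 1) -{2}E; ring.
by move/eqP; rewrite pnatr_eq0.
Qed.

Lemma h1_neq1 : h1 <> 1%:M.
Proof.
rewrite oneM33 => /M33_inj [_ [_ [_ [_ [E _]]]]].
have : (2 : R) = 0 by rewrite -[2]/(1 + 1) -{1}E; ring.
by move/eqP; rewrite pnatr_eq0.
Qed.


Lemma conjback (a r : 'M[R]_3) : SO3 a -> a^T *m (a *m r *m a^T) *m a = r.
Proof.
move=> [Ha _]; by rewrite !mulmxA Ha mul1mx -mulmxA Ha mulmx1.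
Qed.

Lemma conjback' (a g : 'M[R]_3) : SO3 a -> a *m (a^T *m g *m a) *m a^T = g.
Proof.
move=> Ha; have := SO3_rt Ha => Hr.
by rewrite !mulmxA Hr mul1mx -mulmxA Hr mulmx1.
Qed.

Lemma conjSO3 (H : 'M[R]_3 -> Prop) : conj_class H (@SO3 R) -> forall g, SO3 g -> H g.
Proof.
move=> [a Ha HH] g Hg; apply/HH.
by apply: SO3_mul; [apply: SO3_mul => //; apply: SO3_tr|].
Qed.

Lemma conjtriv (H : 'M[R]_3 -> Prop) : conj_class H (@trivG R) -> forall g, H g -> g = 1%:M.
Proof.
move=> [a Ha HH] g /HH; rewrite /trivG => E.
by rewrite -(conjback' g Ha) E mulmx1 SO3_rt.
Qed.

Lemma conjSO2_nt (H : 'M[R]_3 -> Prop) : conj_class H (@SO2 R) -> exists g, H g /\ g <> 1%:M.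
Proof.
move=> [a Ha HH]; exists (a *m rotz 0 1 *m a^T); split.
  apply/HH; rewrite conjback //; exists 0, 1; split => //; ring.
move=> E; have := conjback (rotz 0 1) Ha; rewrite E mulmx1 (proj1 Ha) rotzE oneM33.
case/M33_inj => E1 _; have : (1 : R) = 0 by rewrite E1.
by move/eqP; rewrite oner_eq0.
Qed.

Lemma conjSO2_no (H : 'M[R]_3 -> Prop) : conj_class H (@SO2 R) -> exists g, SO3 g /\ ~ H g.
Proof.
move=> [a Ha HH]; exists (a *m h1 *m a^T); split.
  by apply: SO3_mul; [apply: SO3_mul => //; apply: SO3_h1 | apply: SO3_tr].
by move/HH; rewrite conjback //; apply: notSO2_h1.
Qed.

Lemma SO2_SO3 (h : 'M[R]_3) : SO2 h -> SO3 h /\ h *m e3 = e3.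
Proof.
move=> [c [s [Hc ->]]]; split; first exact: SO3_rotz.
by rewrite rotzE /e3 mulMV; congr V3; ring.
Qed.

Lemma sos2 (a b : R) : a^+2 + b^+2 = 0 -> a = 0 /\ b = 0.
Proof. by move=> H; have [] := @sos3 a b 0; rewrite ?expr0n ?addr0. Qed.

Lemma rot_fix (h : 'M[R]_3) : SO3 h -> h *m e3 = e3 -> SO2 h.
Proof.
rewrite (M33E h); move: (h i0 i0) (h i0 i1) (h i0 i2) (h i1 i0) (h i1 i1) (h i1 i2) (h i2 i0) (h i2 i1) (h i2 i2).
move=> a b c d e f g k i [Ho Hd]; rewrite /e3 mulMV => /V3_inj.
rewrite !mulr0 !add0r !mulr1 => [[Ec Ef Ei]]; subst c f i.
move: Ho Hd; rewrite trM33 mulM33 oneM33 det33 => /M33_inj.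
move=> [E1 [E2 [E3 [E4 [E5 [E6 [E7 [E8 E9]]]]]]]] Ed.
have Eg : g = 0 by rewrite -E3; ring.
have Ek : k = 0 by rewrite -E6; ring.
subst g k.
have X : (e - a)^+2 + (b + d)^+2 = 0.
  rewrite [LHS](_ : _ = (a*a + d*d + 0*0 - 1) + (b*b + e*e + 0*0 - 1) -
     2 * (a * (e * 1 - 0 * 0) - b * (d * 1 - 0 * 0) + 0 * (d * 0 - e * 0) - 1)); last by ring.
  by rewrite E1 E5 Ed; ring.
have [/eqP Hea /eqP Hbd] := sos2 X.
move: Hea Hbd; rewrite subr_eq0 addr_eq0 => /eqP -> /eqP ->.
exists a, d; split; first by rewrite -E1; ring.
by rewrite rotzE.
Qed.


Lemma polar (p q : R) : exists c s r, c^+2 + s^+2 = 1 /\ p = r * c /\ q = r * s.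
Proof.
case: (eqVneq (p^+2 + q^+2) 0) => [H|H].
  have [-> ->] := sos2 H; exists 1, 0, 0; split; first by ring.
  by rewrite !mul0r.
have hx : 0 <= p^+2 + q^+2 by rewrite addr_ge0 // sqr_ge0.
set r := Num.sqrt (p^+2 + q^+2).
have hr2 : r^+2 = p^+2 + q^+2 by rewrite sqr_sqrtr.
have r0 : r != 0 by apply: contraNneq H => r0; rewrite -hr2 r0 expr0n.
exists (p / r), (q / r), r; split.
  by rewrite !expr_div_n -mulrDl -hr2 divff // sqrf_eq0.
by split; rewrite mulrC divfK.
Qed.

Lemma frame (u : 'cV[R]_3) : u != 0 -> exists a r, SO3 a /\ r != 0 /\ u = r *: (a *m e3).
Proof.
rewrite (V3E u); move: (u i0 0) (u i1 0) (u i2 0) => u0 u1 u2 Hu.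
have [cp [sp [rho [Hp [E0 E1]]]]] := polar u0 u1.
have [ct [st [r [Ht [E2 E3]]]]] := polar u2 rho.
exists (rotz cp sp *m rxz ct st), r; split.
  by apply: SO3_mul; [apply: SO3_rotz|apply: SO3_rxz].
split.
  apply: (contraNneq _ Hu) => r0; rewrite r0 mul0r in E2 E3.
  by rewrite E3 !mul0r in E0 E1; rewrite E0 E1 E2 -V3_0.
rewrite rotzE /rxz /e3 -mulmxA !mulMV V3Z; congr V3; rewrite ?E0 ?E1 ?E2 ?E3; ring.
Qed.


Lemma fixall (g : 'M[R]_3) : (forall x : 'cV[R]_3, g *m x = x) -> g = 1%:M.
Proof.
move=> H; apply/matrixP => i j; have := H (delta_mx j 0).
by rewrite -colE => /(congr1 (fun m : 'cV[R]_3 => m i 0)); rewrite !mxE ?andbT => ->.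
Qed.

Lemma negE (x : R) : x = - x -> x = 0.
Proof. move=> H; lra. Qed.

End S.

Theorem proposition7p1 (R : realType) (n : nat) (rho : 'M[R]_3 -> 'M[R]_n)
  (hrho : is_rep rho) (v : 'cV[R]_n) :
  exists d : nat, subspace_dim (Cov1 rho v) d /\ (d \in [:: 0%N; 1%N; 3%N]) /\
    [/\ conj_class (sym_group (Cov1 rho v)) (@SO3 R) <-> (forall x, Cov1 rho v x <-> x = 0),
        conj_class (sym_group (Cov1 rho v)) (@SO2 R) <-> d = 1%N
      & conj_class (sym_group (Cov1 rho v)) (@trivG R) <-> d = 3%N].
Proof.
set S := Cov1 rho v.
have S0 : S 0 by apply: Cov1_0.
have SD : forall x y, S x -> S y -> S (x + y) by move=> *; apply: Cov1_add.
have SZ : forall c x, S x -> S (c *: x) by move=> *; apply: Cov1_scale.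
have SX : forall x y, S x -> S y -> S (cross x y) by move=> *; apply: Cov1_cross.
case: (dim_cases S0 SD SZ SX) => [H0 | [u Hu H1] | H3].
- exists 0%N; split; first exact: sd0; split => //.
  have Hsym : forall g, sym_group S g <-> SO3 g.
    move=> g; split => [[]//|Hg]; split => // x /H0 ->; by rewrite mulmx0.
  split.
  + split => _ //; exists 1%:M; first exact: SO3_1.
    by move=> g; rewrite trmx1 mul1mx mulmx1; exact: Hsym.
  + split => // /conjSO2_no [g [Hg Hn]]; exfalso; apply: Hn; exact/Hsym.
  + split => // /conjtriv Ht; exfalso; apply: (@h1_neq1 R); apply: Ht; apply/Hsym; exact: SO3_h1.
- have Su : S u by apply/H1; exists 1; rewrite scale1r.
  have Hsym : forall g, sym_group S g <-> SO3 g /\ g *m u = u.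
    move=> g; split => [[Hg Hf]|[Hg Hf]]; first by split => //; apply: Hf.
    by split => // x /H1 [c ->]; rewrite -scalemxAr Hf.
  have [a [r [Ha [Hr Hu']]]] := frame Hu.
  have Hc : conj_class (sym_group S) (@SO2 R).
    exists a => // g; rewrite Hsym; split => [[Hg Hgu]|Hs].
      apply: rot_fix.
        by apply: SO3_mul; [apply: SO3_mul => //; apply: SO3_tr|].
      have Hae : a *m e3 R = r^-1 *: u by rewrite Hu' scalerA mulVf // scale1r.
      rewrite -mulmxA Hae -scalemxAr -mulmxA Hgu scalemxAr -Hae mulmxA (proj1 Ha).
      by rewrite mul1mx.
    have [Hh He] := SO2_SO3 Hs.
    rewrite -(conjback' g Ha); set h := a^T *m g *m a in Hs Hh He *; split.
      by apply: SO3_mul; [apply: SO3_mul => //|apply: SO3_tr].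
    rewrite [in RHS]Hu' [in X in _ *m X]Hu' -!scalemxAr; congr (_ *: _).
    by rewrite -!mulmxA (mulmxA a^T a) (proj1 Ha) mul1mx; move: He; rewrite /h -!mulmxA => ->.
  exists 1%N; split; first exact: sd1 Hu H1; split => //.
  split.
  + split => [/conjSO3 Hall|/(_ u) [/(_ Su) E]]; last by rewrite E eqxx in Hu.
    exfalso; move/negP: Hu; apply; apply/eqP.
    have F g : SO3 g -> g *m u = u by move=> Hg; have [] := Hsym g; case/(_ (Hall g Hg)).
    move: (F _ (SO3_h1 R)) (F _ (SO3_rotz (c:=-1) (s:=0) ltac:(ring))).
    rewrite (V3E u) /h1 rotzE !mulMV => /V3_inj [_ E1 E2] /V3_inj [E0 _ _].
    rewrite V3_0; congr V3; apply: negE.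
    * by rewrite -{1}E0; ring.
    * by rewrite -{1}E1; ring.
    * by rewrite -{1}E2; ring.
  + by split.
  + split => // /conjtriv Ht; exfalso.
    have [g [Hg Hn]] := conjSO2_nt Hc; exact: Hn (Ht g Hg).
- exists 3%N; split; first exact: sd3; split => //.
  have Hsym : forall g, sym_group S g <-> g = 1%:M.
    move=> g; split => [[Hg Hf]|->]; first by apply: fixall => x; apply: Hf.
    by split; [apply: SO3_1 | move=> x _; rewrite mul1mx].
  split.
  + split => [/conjSO3 Hall|/(_ (e3 R)) [/(_ (H3 _)) E]].
      by exfalso; apply: (@h1_neq1 R); apply/Hsym; apply: Hall; apply: SO3_h1.
    by move: E; rewrite /e3 V3_0 => /V3_inj [_ _ /eqP]; rewrite oner_eq0.
  + split => // /conjSO2_nt [g [Hg Hn]]; exfalso; exact/Hn/Hsym.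
  + split => // _; exists 1%:M; first exact: SO3_1.
    by move=> g; rewrite trmx1 mul1mx mulmx1 Hsym.
Qed.
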